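(* Let $\mathcal{H}$ be a Hilbert space of finite dimension $d$, let $\mathcal{Z}$ be a finite set with probability distribution $\{p_z\}_{z\in\mathcal{Z}}$, let $A^{(i)}_z$ ($i=1,\dots,R$, $z\in\mathcal{Z}$) be Hermitian operators on $\mathcal{H}$ and $b_1,\dots,b_R\in\mathbb{R}$. Suppose there exists at least one collection of density matrices $\{\rho_z\}_{z\in\mathcal{Z}}$ on $\mathcal{H}$ satisfying $\sum_z p_z\operatorname{Tr}[A^{(i)}_z\rho_z]=b_i$ for all $i=1,\dots,R$ (e.g. the true ensemble from which these values were observed). Then there exists a collection of density matrices $\{\sigma_z\}_{z\in\mathcal{Z}}$ on $\mathcal{H}$ satisfying $\sum_z p_z\operatorname{Tr}[A^{(i)}_z\sigma_z]=b_i$ for all $i=1,\dots,R$ such that at most $R$ of the states $\sigma_z$ are not pure.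
   Context: A density matrix is a Hermitian, positive semi-definite, unit-trace operator; it is pure if it equals $|\phi\rangle\langle\phi|$ for some unit vector $|\phi\rangle$. *)

(* Defs.v *)
From HB Require Import structures.
From mathcomp Require Import all_boot all_order all_algebra.
From mathcomp Require Import complex.
From mathcomp Require Import reals.
Set Implicit Arguments. Unset Strict Implicit. Unset Printing Implicit Defensive.
Import Order.TTheory GRing.Theory Num.Theory.
Local Open Scope ring_scope.

Definition adjmx (R : rcfType) (m n : nat) (A : 'M[R[i]]_(m, n)) : 'M[R[i]]_(n, m) :=
  \matrix_(i < n, j < m) (A j i)^*.

Definition hermitian_op (R : rcfType) (d : nat) (A : 'M[R[i]]_d) : Prop :=
  adjmx A = A.

(* positive semi-definite: <v, A v> is real and nonnegative for all v *)
Definition psd_op (R : rcfType) (d : nat) (A : 'M[R[i]]_d) : Prop :=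
  forall v : 'cV[R[i]]_d, 0 <= (adjmx v *m A *m v) 0 0.

Definition density_op (R : rcfType) (d : nat) (rho : 'M[R[i]]_d) : Prop :=
  [/\ hermitian_op rho, psd_op rho & \tr rho = 1].

Definition pure_state (R : rcfType) (d : nat) (rho : 'M[R[i]]_d) : Prop :=
  exists phi : 'cV[R[i]]_d, (adjmx phi *m phi) 0 0 = 1 /\ rho = phi *m adjmx phi.

Definition cR (R : rcfType) (x : R) : R[i] := Complex x 0.

(* Main.v *)
Require Import Defs.
From HB Require Import structures.
From mathcomp Require Import ring.
From mathcomp Require Import all_boot all_order all_algebra.
From mathcomp Require Import complex.
From mathcomp Require Import reals.
Import Order.TTheory GRing.Theory Num.Theory.
Local Open Scope ring_scope.
Lemma kernel_exists (F : fieldType) (I J : finType) (M : J -> I -> F) (S : {set I}) :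
  (#|J| < #|S|)%N ->
  exists c : I -> F, (forall i, i \notin S -> c i = 0) /\ (exists i, c i != 0) /\
    forall j, \sum_i M j i * c i = 0.
Proof.
move=> hlt.
pose A : 'M[F]_(#|S|, #|J|) := \matrix_(a, b) M (fintype.enum_val b) (fintype.enum_val a).
have hr : (\rank A < #|S|)%N by apply: leq_ltn_trans (rank_leq_col A) hlt.
have hk : kermx A != 0.
  by rewrite -mxrank_eq0 mxrank_ker subn_eq0 -ltnNge.
have [a ha] : exists a, row a (kermx A) != 0.
  apply/existsP; apply: contraR hk; rewrite negb_exists => /forallP H.
  by apply/eqP/row_matrixP => a; rewrite row0; apply/eqP; move: (H a); rewrite negbK.
set u := row a (kermx A).
have hu : u *m A = 0 by rewrite /u -row_mul mulmx_ker row0.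
pose c i := if (i \in S) =P true is ReflectT Hi then u 0 (fintype.enum_rank_in Hi i) else 0.
exists c; split; [|split].
- move=> i /negbTE hi; rewrite /c; case: eqP => // Hi; by rewrite Hi in hi.
- have [b hb] : exists b, u 0 b != 0.
    apply/existsP; apply: contraR ha; rewrite negb_exists => /forallP H.
    apply/eqP/rowP => b; rewrite [RHS]mxE; exact/eqP/negPn/H.
  exists (@fintype.enum_val _ (mem S) b); rewrite /c; case: eqP => [Hi|[]]; last exact: fintype.enum_valP.
  by rewrite fintype.enum_valK_in.
- move=> j.
  transitivity ((u *m A) 0 (fintype.enum_rank j)); last by rewrite hu mxE.
  rewrite mxE.
  rewrite (bigID (fun i => i \in S)) /= [X in _ + X]big1; last first.
    by move=> i /negbTE hi; rewrite /c; case: eqP => // Hi; [rewrite Hi in hi| rewrite mulr0].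
  rewrite addr0 (big_enum_val (fun i => M j i * c i)) /=.
  apply: eq_bigr => k _; rewrite [A _ _]mxE fintype.enum_rankK mulrC; congr (_ * _).
  rewrite /c; case: eqP => [Hi|[]]; last exact: fintype.enum_valP.
  by rewrite fintype.enum_valK_in.
Qed.

Lemma carath (F : realFieldType) (I J : finType) (M : J -> I -> F) (x : I -> F) :
  (forall i, 0 <= x i) ->
  exists y : I -> F, (forall i, 0 <= y i) /\
    (forall j, \sum_i M j i * y i = \sum_i M j i * x i) /\
    (#|[set i | y i != 0%R]| <= #|J|)%N.
Proof.
move=> hx0.
suff H : forall n (x : I -> F), (forall i, 0 <= x i) -> (#|[set i | x i != 0%R]| <= n)%N ->
  exists y : I -> F, (forall i, 0 <= y i) /\
    (forall j, \sum_i M j i * y i = \sum_i M j i * x i) /\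
    (#|[set i | y i != 0%R]| <= #|J|)%N.
  exact: H (leqnn _).
clear hx0; elim=> [|n IH] {}x hx hn.
  by exists x; split=> //; split=> //; apply: leq_trans hn _.
case: (leqP #|[set i | x i != 0]| #|J|) => hs.
  by exists x.
have [c [c0 [[i0 hi0] hc]]] := @kernel_exists _ _ _ M _ hs.
have [c' [c'0 [[k hk] hc']]] : exists c' : I -> F,
    (forall i, i \notin [set i | x i != 0] -> c' i = 0) /\ (exists k, 0 < c' k) /\
    forall j, \sum_i M j i * c' i = 0.
  case: (ltrgtP 0 (c i0)) => h.
  - by exists c; split=> //; split=> //; exists i0.
  - exists (fun i => - c i); split; first by move=> i /c0 ->; rewrite oppr0.
    split; first by exists i0; rewrite oppr_gt0.
    by move=> j; under eq_bigr do rewrite mulrN; rewrite sumrN hc oppr0.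
  - by rewrite -h eqxx in hi0.
case: (@arg_minP _ _ _ k (fun i => 0 < c' i) (fun i => x i / c' i) hk) => m hm hmin.
set t := x m / c' m.
have t0 : 0 <= t by rewrite /t divr_ge0 // ltW.
pose y i := x i - t * c' i.
have hy0 : forall i, 0 <= y i.
  move=> i; rewrite /y subr_ge0; case: (ltP 0 (c' i)) => h.
    by rewrite -ler_pdivlMr // (hmin i h).
  by apply: le_trans (hx i); rewrite mulr_ge0_le0.
have hym : y m = 0 by rewrite /y /t divfK ?subrr // gt_eqF.
have hsub : [set i | y i != 0] \proper [set i | x i != 0].
  apply/properP; split.
    apply/subsetP => i; rewrite !inE; apply: contraNN => /eqP hxi.
    have : i \notin [set i | x i != 0] by rewrite inE hxi eqxx.
    by rewrite /y; move/c'0 => ->; rewrite hxi mulr0 subrr.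
  exists m; last by rewrite inE hym eqxx.
  rewrite inE; apply: contraTN hm => /eqP xm0.
  have : m \notin [set i | x i != 0] by rewrite inE xm0 eqxx.
  by move/c'0 => ->; rewrite ltxx.
have [z [hz0 [hzs hzc]]] := IH y hy0 (leq_trans (proper_card hsub) hn).
exists z; split=> //; split=> // j; rewrite hzs.
rewrite /y; under eq_bigr do rewrite mulrBr.
rewrite sumrB; under [X in _ - X]eq_bigr do rewrite mulrCA.
by rewrite -mulr_sumr hc' mulr0 subr0.
Qed.
Local Open Scope sesquilinear_scope.

Lemma adjmxE (R : rcfType) m n (A : 'M[R[i]]_(m, n)) : adjmx A = A ^t*.
Proof. by apply/matrixP => a b; rewrite !mxE. Qed.

Lemma cRE (R : rcfType) (x : R) : cR x = (x%:C)%C.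
Proof. by []. Qed.

Lemma ge0_cR (R : rcfType) (z : R[i]) : 0 <= z -> z = cR (complex.Re z) /\ 0 <= complex.Re z.
Proof.
rewrite lecE => /andP [/eqP h1 h2]; split => //.
by case: z h1 {h2} => a b /= ->.
Qed.

Lemma diag_sum (C : numClosedFieldType) d (A B : 'M[C]_d) (s : 'rV[C]_d) :
  A *m diag_mx s *m B = \sum_j s 0 j *: (col j A *m row j B).
Proof.
apply/matrixP => a b; rewrite mxE summxE.
apply: eq_bigr => j _; rewrite !mxE big_ord1 !mxE.
rewrite (bigD1 j) //= big1 ?addr0; last first.
  by move=> k hk; rewrite !mxE (negbTE hk) mulr0n mulr0.
by rewrite mxE eqxx mulr1n mulrCA mulrA [_ * s 0 j]mulrC -mulrA.
Qed.

Lemma row_col_mul (C : pzSemiRingType) m n p (X : 'M[C]_(m,n)) (Y : 'M_(n,p)) i j :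
  (row i X *m col j Y) 0 0 = (X *m Y) i j.
Proof. by rewrite !mxE; apply: eq_bigr => k _; rewrite !mxE. Qed.

Lemma mul_col (C : pzSemiRingType) m n p (X : 'M[C]_(m,n)) (Y : 'M_(n,p)) i j :
  (X *m col j Y) i 0 = (X *m Y) i j.
Proof. by rewrite !mxE; apply: eq_bigr => k _; rewrite !mxE. Qed.

Lemma density_decomp (R : rcfType) d (rho : 'M[R[i]]_d) : density_op rho ->
  exists (lam : 'I_d -> R) (phi : 'I_d -> 'cV[R[i]]_d),
   (forall j, 0 <= lam j) /\ (forall j, (adjmx (phi j) *m phi j) 0 0 = 1) /\
   rho = \sum_j cR (lam j) *: (phi j *m adjmx (phi j)).
Proof.
case=> hH hpsd htr.
have hN : rho \is normalmx.
  by apply/normalmxP; rewrite -adjmxE hH.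
have := @orthomx_spectralP _ _ rho; rewrite hN => /elimT /(_ isT) hrho.
set P := spectralmx rho in hrho; set s := spectral_diag rho in hrho.
have hU : P \is unitarymx by exact: spectral_unitarymx.
have hPP := unitarymxP hU.
rewrite invmx_unitary // in hrho.
have hs : forall j, s 0 j = (adjmx ((row j P)^t*) *m rho *m (row j P)^t*) 0 0.
  move=> j; rewrite adjmxE trmxCK hrho -row_mul !mulmxA -mulmxA.
  rewrite hPP mul1mx tr_row map_col row_col_mul -mulmxA hPP mulmx1 !mxE.
  by rewrite eqxx mulr1n.
exists (fun j => complex.Re (s 0 j)), (fun j => (row j P)^t*).
split; [|split].
- move=> j; have := hpsd ((row j P)^t*); rewrite -hs.
  by case/ge0_cR.
- move=> j; rewrite adjmxE trmxCK -row_mul mxE.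
  by rewrite tr_row map_col mul_col hPP !mxE eqxx.
- rewrite {1}hrho diag_sum; apply: eq_bigr => j _.
  have := hpsd ((row j P)^t*); rewrite -hs => /ge0_cR [<- _].
  by rewrite adjmxE trmxCK tr_row map_col.
Qed.

Lemma conj_fixed_real (R : rcfType) (z : R[i]) : z^* = z -> z = cR (complex.Re z).
Proof.
move=> h; have : z \is Num.real by rewrite CrealE h.
by move/complex_realP => [k ->].
Qed.

Lemma trace_rank1 (R : rcfType) d (B : 'M[R[i]]_d) (phi : 'cV[R[i]]_d) :
  \tr (B *m (phi *m adjmx phi)) = (adjmx phi *m B *m phi) 0 0.
Proof.
by rewrite mulmxA mxtrace_mulC mulmxA /mxtrace big_ord1.
Qed.

Lemma adjmx_mul (R : rcfType) m n p (X : 'M[R[i]]_(m, n)) (Y : 'M[R[i]]_(n, p)) :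
  adjmx (X *m Y) = adjmx Y *m adjmx X.
Proof. by rewrite !adjmxE trmx_mul map_mxM. Qed.

Lemma adjmxK (R : rcfType) m n (X : 'M[R[i]]_(m, n)) : adjmx (adjmx X) = X.
Proof. by rewrite !adjmxE trmxCK. Qed.

Lemma herm_real (R : rcfType) d (B : 'M[R[i]]_d) (phi : 'cV[R[i]]_d) :
  hermitian_op B -> \tr (B *m (phi *m adjmx phi)) = cR (complex.Re (\tr (B *m (phi *m adjmx phi)))).
Proof.
move=> hB; apply: conj_fixed_real; rewrite trace_rank1.
have -> : ((adjmx phi *m B *m phi) 0 0)^* = (adjmx (adjmx phi *m B *m phi)) 0 0 by rewrite !mxE.
by rewrite !adjmx_mul adjmxK hB mulmxA.
Qed.

Lemma cR_sum (R : rcfType) (K : finType) (w : K -> R) : cR (\sum_k w k) = \sum_k cR (w k).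
Proof. by rewrite cRE rmorph_sum. Qed.

Lemma cR_mul (R : rcfType) (x y : R) : cR (x * y) = cR x * cR y.
Proof. by rewrite !cRE rmorphM. Qed.

Lemma cR_conj (R : rcfType) (x : R) : (cR x)^* = cR x.
Proof. by rewrite cRE; exact: conjc_real. Qed.

Lemma cR_ge0 (R : rcfType) (x : R) : 0 <= x -> 0 <= cR x.
Proof. by rewrite cRE ler0c. Qed.

Lemma cR1 (R : rcfType) : cR (1 : R) = 1.
Proof. by []. Qed.

Lemma tr_combo (R : rcfType) d n (B : 'M[R[i]]_d) (w : 'I_n -> R) (X : 'I_n -> 'M[R[i]]_d) :
  \tr (B *m \sum_j cR (w j) *: X j) = \sum_j cR (w j) * \tr (B *m X j).
Proof.
rewrite mulmx_sumr raddf_sum; apply: eq_bigr => j _.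
by rewrite -scalemxAr; apply: mxtraceZ.
Qed.

Lemma tr_combo1 (R : rcfType) d n (w : 'I_n -> R) (phi : 'I_n -> 'cV[R[i]]_d) :
  (forall j, (adjmx (phi j) *m phi j) 0 0 = 1) ->
  \tr (\sum_j cR (w j) *: (phi j *m adjmx (phi j))) = cR (\sum_j w j).
Proof.
move=> h; rewrite raddf_sum cR_sum /=; apply: eq_bigr => j _.
by rewrite (mxtraceZ (cR (w j))) mxtrace_mulC /mxtrace big_ord1 h mulr1.
Qed.

Lemma herm_combo (R : rcfType) d n (w : 'I_n -> R) (phi : 'I_n -> 'cV[R[i]]_d) :
  hermitian_op (\sum_j cR (w j) *: (phi j *m adjmx (phi j))).
Proof.
apply/matrixP => a b; rewrite !mxE !summxE rmorph_sum /=; apply: eq_bigr => j _.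
by rewrite !mxE !big_ord1 !mxE !rmorphM /= cR_conj conjCK [_ * (_ ^*)]mulrC.
Qed.

Lemma psd_combo (R : rcfType) d n (w : 'I_n -> R) (phi : 'I_n -> 'cV[R[i]]_d) :
  (forall j, 0 <= w j) ->
  psd_op (\sum_j cR (w j) *: (phi j *m adjmx (phi j))).
Proof.
move=> hw v; rewrite mulmx_sumr mulmx_suml summxE; apply: sumr_ge0 => j _.
rewrite -scalemxAr -scalemxAl mxE; apply: mulr_ge0; first exact: cR_ge0.
rewrite [adjmx v *m _]mulmxA -mulmxA.
have -> : adjmx (phi j) *m v = adjmx (adjmx v *m phi j) by rewrite adjmx_mul adjmxK.
rewrite mxE big_ord1 [adjmx (_ *m _) 0 0]mxE.
exact: mul_conjC_ge0.
Qed.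

Lemma sum_identity (R : rcfType) d (Z : finType) (p : Z -> R) (B : Z -> 'M[R[i]]_d)
  (phi : Z -> 'I_d -> 'cV[R[i]]_d) (w : Z * 'I_d -> R) :
  (forall z, hermitian_op (B z)) ->
  \sum_(z : Z) cR (p z) * \tr (B z *m \sum_j cR (w (z, j)) *: (phi z j *m adjmx (phi z j)))
  = cR (\sum_(ij : Z * 'I_d) p ij.1 * complex.Re (\tr (B ij.1 *m (phi ij.1 ij.2 *m adjmx (phi ij.1 ij.2)))) * w ij).
Proof.
move=> hB.
pose F z j := p z * complex.Re (\tr (B z *m (phi z j *m adjmx (phi z j)))) * w (z, j).
rewrite (eq_bigr (fun ij => F ij.1 ij.2)); last by case.
rewrite -(pair_bigA _ F) /= cR_sum; apply: eq_bigr => z _.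
rewrite tr_combo mulr_sumr cR_sum; apply: eq_bigr => j _.
rewrite [in LHS](@herm_real _ _ _ _ (hB z)) /F !cR_mul; ring.
Qed.

Lemma row_identity (R : rcfType) d (Z : finType) (w : Z * 'I_d -> R) z :
  \sum_(ij : Z * 'I_d) ((ij.1 == z)%:R * w ij) = \sum_j w (z, j).
Proof.
pose F z' j := (z' == z)%:R * w (z', j).
rewrite (eq_bigr (fun ij => F ij.1 ij.2)); last by case.
rewrite -(pair_bigA _ F) (bigD1 z) //= [X in _ + X]big1 ?addr0.
  by apply: eq_bigr => j _; rewrite /F eqxx mul1r.
by move=> z' /negbTE hz; apply: big1 => j _; rewrite /F hz mul0r.
Qed.

Local Close Scope sesquilinear_scope.

Theorem mainTheorem2 (R : realType) (d : nat) (Z : finType) (p : Z -> R)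
  (nRR : nat) (A : 'I_nRR -> Z -> 'M[R[i]]_d) (b : 'I_nRR -> R) :
  (forall z, 0 <= p z) -> \sum_(z : Z) p z = 1 ->
  (forall k z, hermitian_op (A k z)) ->
  (exists rho : Z -> 'M[R[i]]_d,
      (forall z, density_op (rho z)) /\
      forall k, \sum_(z : Z) cR (p z) * \tr (A k z *m rho z) = cR (b k)) ->
  exists sigma : Z -> 'M[R[i]]_d,
    (forall z, density_op (sigma z)) /\
    (forall k, \sum_(z : Z) cR (p z) * \tr (A k z *m sigma z) = cR (b k)) /\
    exists S : {set Z}, (#|S| <= nRR)%N /\ forall z, z \notin S -> pure_state (sigma z).
Proof.
move=> hp0 hp1 hA [rho [hrho hb]].
have H1 : forall z, exists lz : 'I_d -> R,
   exists phi : 'I_d -> 'cV[R[i]]_d,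
   (forall j, 0 <= lz j) /\ (forall j, (adjmx (phi j) *m phi j) 0 0 = 1) /\
   rho z = \sum_j cR (lz j) *: (phi j *m adjmx (phi j)).
  by move=> z; have [lam [phi H]] := @density_decomp _ _ _ (hrho z); exists lam, phi.
have [lam hlam] := fin_all_exists H1.
have [phi hphi] := fin_all_exists hlam.
have hlam0 z j : 0 <= lam z j by have [] := hphi z.
have hunit z j : (adjmx (phi z j) *m phi z j) 0 0 = 1 by have [_ []] := hphi z.
have hrhoE z : rho z = \sum_j cR (lam z j) *: (phi z j *m adjmx (phi z j)) by have [_ []] := hphi z.
pose M (r : Z + 'I_nRR) (ij : Z * 'I_d) : R := match r with
  | inl z => (ij.1 == z)%:R
  | inr k => p ij.1 * complex.Re (\tr (A k ij.1 *m (phi ij.1 ij.2 *m adjmx (phi ij.1 ij.2)))) end.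
pose x (ij : Z * 'I_d) := lam ij.1 ij.2.
have [y [hy0 [hyM hyc]]] := @carath _ _ _ M x (fun ij => hlam0 _ _).
pose sigma z := \sum_j cR (y (z, j)) *: (phi z j *m adjmx (phi z j)).
have hsumy z : \sum_j y (z, j) = 1.
  have := hyM (inl z); rewrite /M !row_identity /x /= => ->.
  have := hrho z; case=> _ _; rewrite hrhoE tr_combo1 // => /(congr1 (@complex.Re R)).
  by [].
exists sigma; split; [|split].
- move=> z; split; [exact: herm_combo | exact: psd_combo | ].
  by rewrite tr_combo1 // hsumy.
- move=> k; rewrite -hb.
  under [RHS]eq_bigr do rewrite hrhoE.
  rewrite !sum_identity //.
  have := hyM (inr k); rewrite /M /x /= => ->.
  by rewrite (@sum_identity _ _ _ p (A k) phi (fun ij => lam ij.1 ij.2)).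
have hne z : exists j0, y (z, j0) != 0.
  case: (pickP (fun j => y (z, j) != 0)) => [j0 h|h]; first by exists j0.
  have := hsumy z; rewrite big1; last by move=> j _; move: (h j) => /negbFE/eqP.
  by move/esym/eqP; rewrite oner_eq0.
set S := [set z | (1 < #|[set j | y (z, j) != 0%R]|)%N].
exists S; split.
  have hcard : #|[set ij | y ij != 0%R]| = (\sum_z #|[set j | y (z, j) != 0%R]|)%N.
    rewrite -sum1dep_card big_mkcond /=.
    pose G z j := if y (z, j) != 0 then 1%N else 0%N.
    rewrite (eq_bigr (fun ij => G ij.1 ij.2)); last by case.
    rewrite -(pair_bigA _ G); apply: eq_bigr => z _.
    rewrite -(sum1dep_card (fun j => y (z, j) != 0)) [RHS]big_mkcond.
    by apply: eq_bigr => j _.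
  have hfib z : (1 + (z \in S) <= #|[set j | y (z, j) != 0%R]|)%N.
    case: (boolP (z \in S)) => hz; first by move: hz; rewrite inE.
    have [j0 hj0] := hne z; apply/card_gt0P; exists j0; by rewrite inE.
  have : (#|Z| + #|S| <= #|Z| + nRR)%N.
    apply: leq_trans (_ : _ <= #|[set ij | y ij != 0%R]|)%N _; last first.
      by rewrite (leq_trans hyc) // card_sum card_ord.
    rewrite hcard -[#|Z|]sum1_card -[#|S|]sum1_card [X in (_ + X)%N]big_mkcond -big_split /=.
    apply: leq_sum => z _; move: (hfib z); by case: (z \in S).
  by rewrite leq_add2l.
move=> z; rewrite inE -leqNgt => hle.
have [j0 hj0] := hne z.
have hz j : j != j0 -> y (z, j) = 0.
  move=> hj; apply/eqP; apply: contraNT hj => hy.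
  move/card_le1P: hle => /(_ j0); rewrite inE => /(_ hj0) /(_ j).
  by rewrite !inE hy => /esym/eqP ->.
have hy1 : y (z, j0) = 1.
  by rewrite -(hsumy z) (bigD1 j0) //= big1 ?addr0 // => j /hz.
exists (phi z j0); split; first exact: hunit.
rewrite /sigma (bigD1 j0) //= big1 ?addr0; first by rewrite hy1 cR1 scale1r.
by move=> j /hz ->; rewrite scale0r.
Qed.
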